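(* The LP randomized mechanism has approximation ratio at most $n$ for (integrally) scheduling any number of tasks to $n$ machines without money.
   Context: Scheduling without payments: $n$ machines, $m$ (indivisible) tasks; machine $i$ has private true times $t_{i,j}\ge0$ and declares $\hat t_{i,j}\ge0$. A randomized mechanism outputs a random integral allocation $A$ ($A_{i,j}\in\{0,1\}$, each task to exactly one machine) with marginals $a_{i,j}(\hat{\mathbf t})=\Pr[A_{i,j}=1]$. Machines are bound by their declarations: machine $i$ executes an assigned task $j$ for time $\max\{\hat t_{i,j},t_{i,j}\}$; her cost is $C_i(\hat{\mathbf t})=\sum_j a_{i,j}\max\{\hat t_{i,j},t_{i,j}\}$ and the makespan is $\mathbb E[\max_i\sum_jA_{i,j}\max\{\hat t_{i,j},t_{i,j}\}]$. A mechanism is truthful if for every $\mathbf t$, $i$, $\hat{\mathbf t}$: $C_i(\mathbf t_i,\hat{\mathbf t}_{-i})\le C_i(\hat{\mathbf t})$. Its approximation ratio is the supremum over instances $\mathbf t$ of the makespan under truthful reports divided by the optimal integral makespan $\min_A\max_i\sum_jA_{i,j}t_{i,j}$. The LP randomized mechanism, on declarations $\hat{\mathbf t}$, computes an optimal solution $\alpha(\hat{\mathbf t})$ (selected by a fixed rule among optimal solutions) of the linear program: minimize $\mu$ subject to $\sum_i\alpha_{i,j}=1$ for all $j$, $\mu-\sum_j\alpha_{i,j}\hat t_{i,j}\ge0$ for all $i$, $\alpha_{i,j}\ge0$; and assigns each task $j$ to machine $i$ with probability $\alpha_{i,j}(\hat{\mathbf t})$ (i.e.\ $a_{i,j}=\alpha_{i,j}$).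 *)

(* Defs.v *)
From mathcomp Require Import all_boot all_order all_algebra.
Set Implicit Arguments. Unset Strict Implicit. Unset Printing Implicit Defensive.
Import Order.TTheory GRing.Theory Num.Theory.
Local Open Scope ring_scope.

(* n machines ('I_n), m tasks ('I_m). Times: t i j = time of machine i on task j. *)

Definition alloc (n m : nat) := {ffun 'I_m -> 'I_n}.

(* Execution time of task j on machine i when the machine declared th and has
   true times t (machines are bound by their declarations). *)
Definition exec_time (R : realFieldType) (n m : nat)
  (th t : 'I_n -> 'I_m -> R) (i : 'I_n) (j : 'I_m) : R :=
  Num.max (th i j) (t i j).

Definition makespan (R : realFieldType) (n m : nat)
  (s : 'I_n -> 'I_m -> R) (A : alloc n m) : R :=
  \big[Num.max/0]_(i < n) \sum_(j < m | A j == i) s i j.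

Definition is_opt_makespan (R : realFieldType) (n m : nat)
  (t : 'I_n -> 'I_m -> R) (OPT : R) : Prop :=
  (exists A : alloc n m, makespan t A = OPT) /\
  (forall A : alloc n m, OPT <= makespan t A).

Definition lp_feasible (R : realFieldType) (n m : nat)
  (th : 'I_n -> 'I_m -> R) (alpha : 'I_n -> 'I_m -> R) (mu : R) : Prop :=
  [/\ forall i j, 0 <= alpha i j,
      forall j, \sum_(i < n) alpha i j = 1 &
      forall i, mu - \sum_(j < m) alpha i j * th i j >= 0].

Definition lp_optimal (R : realFieldType) (n m : nat)
  (th : 'I_n -> 'I_m -> R) (alpha : 'I_n -> 'I_m -> R) : Prop :=
  exists mu, lp_feasible th alpha mu /\
    (forall alpha' mu', lp_feasible th alpha' mu' -> mu <= mu').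

Definition is_distr (R : realFieldType) (n m : nat)
  (p : {ffun alloc n m -> R}) : Prop :=
  (forall A, 0 <= p A) /\ \sum_(A : alloc n m) p A = 1.

Definition has_marginals (R : realFieldType) (n m : nat)
  (p : {ffun alloc n m -> R}) (a : 'I_n -> 'I_m -> R) : Prop :=
  forall i j, \sum_(A : alloc n m | A j == i) p A = a i j.

Definition exp_makespan (R : realFieldType) (n m : nat)
  (p : {ffun alloc n m -> R}) (th t : 'I_n -> 'I_m -> R) : R :=
  \sum_(A : alloc n m) p A * makespan (exec_time th t) A.

(* Main.v *)
Require Import Defs.
From mathcomp Require Import all_boot all_order all_algebra.
Import Order.TTheory GRing.Theory Num.Theory.
Local Open Scope ring_scope.

Lemma ms_le_sum (R : realFieldType) (n m : nat) (t : 'I_n -> 'I_m -> R)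
  (A : alloc n m) : (forall i j, 0 <= t i j) ->
  makespan t A <= \sum_(i < n) \sum_(j < m) (A j == i)%:R * t i j.
Proof.
move=> t0; rewrite /makespan; apply: bigmax_le.
  by apply: sumr_ge0 => i _; apply: sumr_ge0 => j _; rewrite mulr_ge0.
move=> i _.
have -> : \sum_(j < m | A j == i) t i j = \sum_(j < m) (A j == i)%:R * t i j.
  rewrite big_mkcond; apply: eq_bigr => j _; by case: (A j == i); rewrite ?mul1r ?mul0r.
rewrite (bigD1 i) //= lerDl; apply: sumr_ge0 => k _; apply: sumr_ge0 => j _.
by rewrite mulr_ge0.
Qed.

Theorem theorem6 (R : realFieldType) (n m : nat) (t : 'I_n -> 'I_m -> R)
  (alpha : 'I_n -> 'I_m -> R) (p : {ffun alloc n m -> R}) (OPT : R) :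
  (0 < n)%N ->
  (forall i j, 0 <= t i j) ->
  lp_optimal t alpha ->
  is_distr p ->
  has_marginals p alpha ->
  is_opt_makespan t OPT ->
  exp_makespan p t t <= n%:R * OPT.
Proof.
move=> n0 t0 [mu [[a0 a1 amu] muopt]] [p0 p1] pm [[Aopt hA] _].
have ex : forall A, makespan (exec_time t t) A = makespan t A.
  move=> A; rewrite /makespan; apply: eq_bigr => i _; apply: eq_bigr => j _.
  by rewrite /exec_time maxxx.
rewrite /exp_makespan; under eq_bigr => A _ do rewrite ex.
have step1 : \sum_(A : alloc n m) p A * makespan t A <=
   \sum_(A : alloc n m) p A * \sum_(i < n) \sum_(j < m) (A j == i)%:R * t i j.
  by apply: ler_sum => A _; apply: ler_wpM2l => //; apply: ms_le_sum.
apply: (le_trans step1).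
have step2 : \sum_(A : alloc n m) p A * \sum_(i < n) \sum_(j < m) (A j == i)%:R * t i j
   = \sum_(i < n) \sum_(j < m) alpha i j * t i j.
  under eq_bigr => A _ do rewrite big_distrr /=.
  rewrite exchange_big /=; apply: eq_bigr => i _.
  under eq_bigr => A _ do rewrite big_distrr /=.
  rewrite exchange_big /=; apply: eq_bigr => j _.
  rewrite -pm big_distrl /= [in RHS]big_mkcond /=; apply: eq_bigr => A _.
  by case: (A j == i); rewrite ?mul1r ?mul0r ?mulr0.
rewrite step2.
have muOPT : mu <= OPT.
  rewrite -hA; apply: (muopt (fun i j => (Aopt j == i)%:R)); split.
  - by move=> i j; rewrite ler0n.
  - move=> j; rewrite (bigD1 (Aopt j)) //= eqxx big1 ?addr0 //.
    by move=> i /negbTE; rewrite eq_sym => ->.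
  - move=> i; rewrite subr_ge0 /makespan.
    apply: le_trans (le_bigmax _ _ i).
    rewrite [X in _ <= X]big_mkcond /=; apply: ler_sum => j _.
    by case: (Aopt j == i); rewrite ?mul1r ?mul0r.
have : \sum_(i < n) \sum_(j < m) alpha i j * t i j <= \sum_(i < n) mu.
  by apply: ler_sum => i _; move: (amu i); rewrite subr_ge0.
rewrite sumr_const card_ord => h; apply: (le_trans h).
by rewrite -[mu *+ n]mulr_natl ler_wpM2l ?ler0n.
Qed.
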